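(* Let $T$ be a minimal homeomorphism of a compact metric space $(X,\delta)$, let $G$ be a locally compact second countable group and let $f\colon X\to G$ be continuous. Then for every $x\in X$ and every integer $n$, \[E_{T^n x}(f)=f(n,x)\cdot E_x(f)\cdot f(n,x)^{-1}.\]
   Context: The cocycle is defined by $f(n,x)=f(T^{n-1}x)\cdots f(Tx)f(x)$ for $n\ge1$, $f(0,x)=\mathbf{1}_G$, and $f(n,x)=f(-n,T^nx)^{-1}$ for $n<0$. It satisfies $f(k,T^lx)f(l,x)=f(k+l,x)$. The essential range at $x\in X$, denoted $E_x(f)$, is the set of $g\in G$ such that for every open neighbourhood $U$ of $g$ and every open neighbourhood $\mathcal O$ of $x$ there is an integer $n\neq0$ with $T^{-n}\mathcal O\cap\mathcal O\cap\{y: f(n,y)\in U\}\neq\varnothing$. *)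

(* Defs.v *)
From HB Require Import structures.
From mathcomp Require Import all_boot all_order all_algebra.
From mathcomp Require Import all_classical all_reals all_analysis.
Set Implicit Arguments. Unset Strict Implicit. Unset Printing Implicit Defensive.
Import Order.TTheory GRing.Theory Num.Theory.
Local Open Scope classical_set_scope.
Local Open Scope ring_scope.

Definition is_topological_group (G : topologicalType)
    (mul : G -> G -> G) (inv : G -> G) (one : G) : Prop :=
  (forall a b c, mul a (mul b c) = mul (mul a b) c) /\
  (forall a, mul one a = a) /\ (forall a, mul a one = a) /\
  (forall a, mul (inv a) a = one) /\ (forall a, mul a (inv a) = one) /\
  continuous (fun p : G * G => mul p.1 p.2) /\ continuous inv.

Definition is_lcsc_group (G : topologicalType)
    (mul : G -> G -> G) (inv : G -> G) (one : G) : Prop :=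
  [/\ is_topological_group mul inv one, hausdorff_space G,
      locally_compact [set: G] & @second_countable G].

Definition is_homeo_with_inverse (X : topologicalType) (T Tinv : X -> X) : Prop :=
  [/\ continuous T, continuous Tinv, cancel T Tinv & cancel Tinv T].

Definition Tpow (X : Type) (T Tinv : X -> X) (n : int) (x : X) : X :=
  match n with
  | Posz k => iter k T x
  | Negz k => iter k.+1 Tinv x
  end.

Definition minimal_homeo (X : topologicalType) (T : X -> X) : Prop :=
  forall A : set X, closed A -> T @^-1` A = A -> A = set0 \/ A = setT.

(* f(n,x) for n >= 0: f(T^{n-1}x) ... f(Tx) f(x), f(0,x) = 1 *)
Fixpoint cocycle_nat (X G : Type) (mul : G -> G -> G) (one : G)
    (T : X -> X) (f : X -> G) (n : nat) (x : X) : G :=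
  match n with
  | 0 => one
  | k.+1 => mul (f (iter k T x)) (cocycle_nat mul one T f k x)
  end.

Definition cocycle (X G : Type) (mul : G -> G -> G) (inv : G -> G) (one : G)
    (T Tinv : X -> X) (f : X -> G) (n : int) (x : X) : G :=
  match n with
  | Posz k => cocycle_nat mul one T f k x
  | Negz k => inv (cocycle_nat mul one T f k.+1 (Tpow T Tinv (Negz k) x))
  end.

Definition ess_range (X G : topologicalType) (mul : G -> G -> G) (inv : G -> G)
    (one : G) (T Tinv : X -> X) (f : X -> G) (x : X) : set G :=
  [set g | forall (U : set G) (O : set X), open U -> U g -> open O -> O x ->
     exists n : int, n != 0 /\
       exists y, O y /\ O (Tpow T Tinv n y) /\ U (cocycle mul inv one T Tinv f n y)].

(* Main.v *)
Require Import Defs.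
From HB Require Import structures.
From mathcomp Require Import all_boot all_order all_algebra.
From mathcomp Require Import all_classical all_reals all_analysis.
From mathcomp Require Import zify.
Import Order.TTheory GRing.Theory Num.Theory.
Local Open Scope classical_set_scope.
Local Open Scope ring_scope.

Lemma negS (j : nat) : Negz j.+1 + 1 = Negz j.
Proof. rewrite !NegzE. lia. Qed.

Lemma cont2 (X G H K: topologicalType) (m : G -> H -> K) (a : X -> G) (b : X -> H) :
  continuous (fun p : G*H => m p.1 p.2) -> continuous a -> continuous b ->
  continuous (fun y => m (a y) (b y)).
Proof. move=> hm ha hb y; apply: continuous2_cvg; [exact: (hm (a y, b y))|exact: ha|exact: hb]. Qed.

Lemma contc (X Y Z : topologicalType) (g : Y -> Z) (h : X -> Y) :
  continuous g -> continuous h -> continuous (fun y => g (h y)).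
Proof. move=> hg hh y; apply: (@continuous_comp _ _ _ h g); [exact: hh|exact: hg]. Qed.

Lemma TpowS (X : Type) (T Tinv : X -> X) : cancel T Tinv -> cancel Tinv T ->
  forall n x, Tpow T Tinv (n + 1) x = T (Tpow T Tinv n x).
Proof.
move=> c1 c2 [k|[|j]] x.
- have -> : Posz k + 1 = Posz k.+1 by lia.
  by rewrite /Tpow iterS.
- by rewrite /= c2.
- by rewrite negS /= c2.
Qed.

Lemma Tpow_add (X : Type) (T Tinv : X -> X) : cancel T Tinv -> cancel Tinv T ->
  forall a b x, Tpow T Tinv (a + b) x = Tpow T Tinv a (Tpow T Tinv b x).
Proof.
move=> c1 c2 a b x; elim/int_rect: a.
- by rewrite add0r.
- move=> n IH. have -> : Posz n.+1 = Posz n + 1 by lia.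
  rewrite addrAC !TpowS // IH //.
- move=> n IH. apply: (can_inj c1).
  rewrite -!TpowS // addrAC.
  have -> : - (n.+1%:Z) + 1 = - (n%:Z) by lia.
  by rewrite IH.
Qed.

Section Grp.
Variables (G : Type) (mul : G -> G -> G) (inv : G -> G) (one : G).
Hypothesis assoc : forall a b c, mul a (mul b c) = mul (mul a b) c.
Hypothesis mul1 : forall a, mul one a = a.
Hypothesis mulg1 : forall a, mul a one = a.
Hypothesis mulVg : forall a, mul (inv a) a = one.
Hypothesis mulgV : forall a, mul a (inv a) = one.

Lemma lcancel a b c : mul a b = mul a c -> b = c.
Proof. by move=> h; rewrite -(mul1 b) -(mul1 c) -(mulVg a) -!assoc h. Qed.

Lemma inv_uniq d c : mul d c = one -> d = inv c.
Proof. by move=> h; rewrite -(mulg1 d) -(mulgV c) assoc h mul1. Qed.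

Lemma invK c : inv (inv c) = c.
Proof. by symmetry; apply: inv_uniq. Qed.
Lemma invM a b : inv (mul a b) = mul (inv b) (inv a).
Proof.
symmetry; apply: inv_uniq.
by rewrite -assoc (assoc (inv a)) mulVg mul1 mulVg.
Qed.
End Grp.

Lemma cn_succ_r (X G : Type) (mul : G -> G -> G) (one : G) (T : X -> X) (f : X -> G) :
  (forall a b c, mul a (mul b c) = mul (mul a b) c) ->
  (forall a, mul one a = a) -> (forall a, mul a one = a) ->
  forall k y, cocycle_nat mul one T f k.+1 y = mul (cocycle_nat mul one T f k (T y)) (f y).
Proof.
move=> assoc m1 m1' k; elim: k => [|k IH] y; first by rewrite /= m1 m1'.
change (mul (f (iter k.+1 T y)) (cocycle_nat mul one T f k.+1 y) = mul (mul (f (iter k T (T y))) (cocycle_nat mul one T f k (T y))) (f y)).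
by rewrite IH assoc iterSr.
Qed.


Section Coc.
Variables (X G : Type) (mul : G -> G -> G) (inv : G -> G) (one : G)
  (T Tinv : X -> X) (f : X -> G).
Hypothesis assoc : forall a b c, mul a (mul b c) = mul (mul a b) c.
Hypothesis mul1 : forall a, mul one a = a.
Hypothesis mulg1 : forall a, mul a one = a.
Hypothesis mulVg : forall a, mul (inv a) a = one.
Hypothesis mulgV : forall a, mul a (inv a) = one.
Hypothesis c1 : cancel T Tinv.
Hypothesis c2 : cancel Tinv T.
Local Notation C := (cocycle mul inv one T Tinv f).
Local Notation P := (Tpow T Tinv).

Lemma CS n x : C (n + 1) x = mul (f (P n x)) (C n x).
Proof.
case: n => [k|[|j]].
- by have -> : Posz k + 1 = Posz k.+1 by lia.
- have -> : Negz 0 + 1 = 0 by rewrite NegzE; lia.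
  by rewrite /= mulg1 mulgV.
- rewrite negS.
  change (inv (cocycle_nat mul one T f j.+1 (iter j.+1 Tinv x)) = mul (f (iter j.+2 Tinv x)) (inv (cocycle_nat mul one T f j.+2 (iter j.+2 Tinv x)))).
  have hy : iter j.+1 Tinv x = T (iter j.+2 Tinv x) by rewrite (iterS j.+1) c2.
  rewrite hy (@cn_succ_r _ _ _ _ T f assoc mul1 mulg1 j.+1 (iter j.+2 Tinv x)).
  by rewrite (@invM _ mul inv one assoc mul1 mulg1 mulVg mulgV) assoc mulgV mul1.
Qed.

Lemma C_add a b x : C (a + b) x = mul (C a (P b x)) (C b x).
Proof.
elim/int_rect: a.
- by rewrite add0r /= mul1.
- move=> n IH. have -> : Posz n.+1 = Posz n + 1 by lia.
  by rewrite addrAC !CS IH (@Tpow_add _ T Tinv c1 c2) assoc.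
- move=> n IH. apply: (@lcancel _ mul inv one assoc mul1 mulVg (f (P (- (n.+1%:Z) + b) x))).
  rewrite -CS addrAC.
  have -> : - (n.+1%:Z) + 1 = - (n%:Z) by lia.
  rewrite IH.
  have -> : - (n%:Z) = - (n.+1%:Z) + 1 by lia.
  by rewrite CS assoc (@Tpow_add _ T Tinv c1 c2).
Qed.
End Coc.

Lemma iter_cont (X : topologicalType) (g : X -> X) k : continuous g -> continuous (iter k g).
Proof.
move=> hg; elim: k => [|k IH] /=; first by move=> y; exact: cvg_id.
exact: (@contc _ _ _ g (iter k g)).
Qed.

Lemma fst_cont (A B : topologicalType) : continuous (@fst A B).
Proof. by move=> p; exact: cvg_fst. Qed.
Lemma snd_cont (A B : topologicalType) : continuous (@snd A B).
Proof. by move=> p; exact: cvg_snd. Qed.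

Lemma cn_cont (X G : topologicalType) (mul : G -> G -> G) (one : G) (T : X -> X) (f : X -> G) k :
  continuous (fun p : G * G => mul p.1 p.2) -> continuous T -> continuous f ->
  continuous (cocycle_nat mul one T f k).
Proof.
move=> hm hT hf; elim: k => [|k IH] /=; first by move=> y; exact: cvg_cst.
apply: (@cont2 _ _ _ _ mul (fun y => f (iter k T y))) => //.
by apply: contc => //; apply: iter_cont.
Qed.

Lemma P_cont (X : topologicalType) (T Tinv : X -> X) n :
  continuous T -> continuous Tinv -> continuous (Tpow T Tinv n).
Proof. by move=> h1 h2; case: n => k; apply: iter_cont. Qed.

Lemma C_cont (X G : topologicalType) (mul : G -> G -> G) (inv : G -> G) (one : G)
  (T Tinv : X -> X) (f : X -> G) n :
  continuous (fun p : G * G => mul p.1 p.2) -> continuous inv ->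
  continuous T -> continuous Tinv -> continuous f ->
  continuous (cocycle mul inv one T Tinv f n).
Proof.
move=> hm hi hT hTi hf; case: n => k; first exact: cn_cont.
apply: (@contc _ _ _ inv (fun y => cocycle_nat mul one T f k.+1 (iter k.+1 Tinv y))) => //.
apply: (@contc _ _ _ (cocycle_nat mul one T f k.+1) (iter k.+1 Tinv)).
  exact: cn_cont.
exact: iter_cont.
Qed.

Lemma key (X G : topologicalType) (mul : G -> G -> G) (inv : G -> G) (one : G)
  (T Tinv : X -> X) (f : X -> G) :
  is_topological_group mul inv one -> is_homeo_with_inverse T Tinv -> continuous f ->
  forall x n g, ess_range mul inv one T Tinv f x g ->
  ess_range mul inv one T Tinv f (Tpow T Tinv n x)
    (mul (mul (cocycle mul inv one T Tinv f n x) g) (inv (cocycle mul inv one T Tinv f n x))).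
Proof.
move=> [assoc [mul1 [mulg1 [mulVg [mulgV [cm ci]]]]]] [hT hTi c1 c2] hf x n g hg.
move=> U O oU Uc oO Ox.
set c := cocycle mul inv one T Tinv f n x.
pose Phi := fun p : (G*G)*G => mul (mul p.1.1 p.1.2) (inv p.2).
have cPhi : continuous Phi.
  apply: (@cont2 _ _ _ _ mul (fun p : (G*G)*G => mul p.1.1 p.1.2) (fun p => inv p.2)) => //.
    apply: (@cont2 _ _ _ _ mul (fun p : (G*G)*G => p.1.1) (fun p : (G*G)*G => p.1.2)) => //.
      exact: (@contc _ _ _ fst fst) (fst_cont _ _) (fst_cont _ _).
    exact: (@contc _ _ _ snd fst) (snd_cont _ _) (fst_cont _ _).
  exact: (@contc _ _ _ inv snd) ci (snd_cont _ _).
have := cPhi ((c,g),c) U (open_nbhs_nbhs (conj oU Uc)).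
case=> [[A B] /= [hA hB] hAB]. case: hA => [[A1 A2] /= [h1 h2] h12].
rewrite nbhsE in h1; case: h1 => V1 [oV1 V1c] sV1.
rewrite nbhsE in h2; case: h2 => V2 [oV2 V2g] sV2.
rewrite nbhsE in hB; case: hB => V3 [oV3 V3c] sV3.
pose O' := (Tpow T Tinv n) @^-1` O `&` (cocycle mul inv one T Tinv f n) @^-1` (V1 `&` V3).
have oO' : open O'.
  apply: openI; apply: open_comp => //.
  - by move=> y _; apply: P_cont.
  - by move=> y _; apply: C_cont.
  - exact: openI.
have O'x : O' x by split => //.
have [m [m0 [y [[Oy [V1y V3y]] [[OTy [V1Ty V3Ty]] Wy]]]]] := hg V2 O' oV2 V2g oO' O'x.
exists m; split => //; exists (Tpow T Tinv n y); split => //; split.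
  by rewrite -(@Tpow_add _ T Tinv c1 c2) addrC (@Tpow_add _ T Tinv c1 c2).
have e : cocycle mul inv one T Tinv f m (Tpow T Tinv n y) =
   Phi ((cocycle mul inv one T Tinv f n (Tpow T Tinv m y), cocycle mul inv one T Tinv f m y),
        cocycle mul inv one T Tinv f n y).
  have h := @C_add _ _ mul inv one T Tinv f assoc mul1 mulg1 mulVg mulgV c1 c2 m n y.
  rewrite addrC (@C_add _ _ mul inv one T Tinv f assoc mul1 mulg1 mulVg mulgV c1 c2) in h.
  by rewrite /Phi /= h -assoc mulgV mulg1.
rewrite e; apply: hAB; split => /=; last exact: sV3.
by apply: h12; split => /=; [apply: sV1|apply: sV2].
Qed.

Theorem lemma1p1 (R : realType) (X : metricType R) (T Tinv : X -> X)
    (G : topologicalType) (mul : G -> G -> G) (inv : G -> G) (one : G)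
    (f : X -> G) :
  compact [set: X] ->
  is_homeo_with_inverse T Tinv ->
  minimal_homeo T ->
  is_lcsc_group mul inv one ->
  continuous f ->
  forall (x : X) (n : int),
    ess_range mul inv one T Tinv f (Tpow T Tinv n x) =
    [set mul (mul (cocycle mul inv one T Tinv f n x) g)
             (inv (cocycle mul inv one T Tinv f n x)) | g in
       ess_range mul inv one T Tinv f x].
Proof.
move=> _ hH _ [Hg _ _ _] hf x n.
have [hT hTi c1 c2] := hH.
have [assoc [mul1 [mulg1 [mulVg [mulgV [cm ci]]]]]] := Hg.
rewrite eqEsubset; split; last first.
  by move=> _ [g hg <-]; exact: key.
move=> h hh.
have := @key _ _ mul inv one T Tinv f Hg hH hf _ (-n) _ hh.
rewrite -(@Tpow_add _ T Tinv c1 c2) addNr /= => hk.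
eexists; first exact: hk.
set c := cocycle mul inv one T Tinv f n x.
have hd : cocycle mul inv one T Tinv f (- n) (Tpow T Tinv n x) = inv c.
  apply: (@inv_uniq _ mul inv one assoc mul1 mulg1 mulgV).
  by rewrite -(@C_add _ _ mul inv one T Tinv f assoc mul1 mulg1 mulVg mulgV c1 c2) addNr.
rewrite hd (@invK _ mul inv one assoc mul1 mulg1 mulgV).
by rewrite -!assoc mulgV mulg1 assoc mulgV mul1.
Qed.
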